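(* Let $p={\rm char}(\mathbb{F}_q)>3$ and let $k$ be a positive integer. Then, as polynomials in $\mathbb{F}_q[x]$, $$2^{p^k}D_{p^k,3}(1,x)+1=3(1-4x)^{\frac{p^k-1}{2}}.$$
   Context: $q=p^e$ with $p>3$ prime. For $n\ge 1$ and $a\in\mathbb{F}_q$, $D_{n,3}(a,x)=\sum_{i=0}^{\lfloor n/2\rfloor}\frac{n-3i}{n-i}\binom{n-i}{i}(-x)^i a^{n-2i}\in\mathbb{F}_q[x]$, where each coefficient $\frac{n-3i}{n-i}\binom{n-i}{i}$ is an integer read modulo $p$; and $D_{0,3}(a,x)=-1$. *)

(* Defs.v *)
From HB Require Import structures.
From mathcomp Require Import all_boot all_order all_algebra all_field.
Set Implicit Arguments. Unset Strict Implicit. Unset Printing Implicit Defensive.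
Import Order.TTheory GRing.Theory Num.Theory.
Local Open Scope ring_scope.

(* The integer coefficient ((n - 3i)/(n - i)) * binom(n - i, i), computed as the
   exact integer quotient ((n - 3i) * binom(n-i,i)) / (n - i) in int. *)
Definition Dcoef (n i : nat) : int :=
  (((n%:Z - (3 * i)%:Z) * ('C(n - i, i))%:Z) %/ (n - i)%:Z)%Z.

Definition D3 (F : nzRingType) (n : nat) (a : F) : {poly F} :=
  if n == 0%N then -1 else
  \sum_(i < n./2.+1) ((Dcoef n i)%:~R * a ^+ (n - 2 * i)) *: (- 'X) ^+ i.

(* Main.v *)
Require Import Defs.
From HB Require Import structures.
From mathcomp Require Import all_boot all_order all_algebra all_field.
From mathcomp Require Import ring zify.
Import GRing.Theory.
Local Open Scope ring_scope.
Set Implicit Arguments. Unset Strict Implicit. Unset Printing Implicit Defensive.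

Section M.
Variable K : comNzRingType.
Definition mk (a b c d : K) : 'M[K]_2 :=
  \matrix_(i < 2, j < 2) if (i == 0 :> nat) then (if (j == 0 :> nat) then a else b)
                         else (if (j == 0 :> nat) then c else d).

Lemma mkM a b c d a' b' c' d' :
  mk a b c d * mk a' b' c' d' = mk (a*a'+b*c') (a*b'+b*d') (c*a'+d*c') (c*b'+d*d').
Proof.
apply/matrixP=> i j; rewrite !mxE !big_ord_recl big_ord0 !mxE /= addr0.
by case: i => [[|[|//]] Hi]; case: j => [[|[|//]] Hj].
Qed.

Lemma mk1 : 1 = mk 1 0 0 1 :> 'M[K]_2.
Proof.
apply/matrixP=> i j; rewrite !mxE.
by case: i => [[|[|//]] Hi]; case: j => [[|[|//]] Hj].
Qed.

Lemma mkD a b c d a' b' c' d' :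
  mk a b c d + mk a' b' c' d' = mk (a+a') (b+b') (c+c') (d+d').
Proof.
apply/matrixP=> i j; rewrite !mxE.
by case: i => [[|[|//]] Hi]; case: j => [[|[|//]] Hj].
Qed.

Lemma mk_inj a b c d a' b' c' d' :
  mk a b c d = mk a' b' c' d' -> [/\ a = a', b = b', c = c' & d = d'].
Proof.
move=> H.
have E := fun i j => congr1 (fun A : 'M[K]_2 => A i j) H.
have := E ord0 ord0; have := E ord0 ord_max; have := E ord_max ord0; have := E ord_max ord_max.
by rewrite !mxE /=.
Qed.

Lemma matnat (n : nat) : n%:R = (n%:R : K)%:M :> 'M[K]_2.
Proof. by rewrite -scalemx1 scaler_nat. Qed.

End M.

Section P.
Variable F : comNzRingType.
Definition e (n : nat) : {poly F} := \poly_(i < n.+1) ('C(n - i, i)%:R * (-1) ^+ i).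

Lemma coef_e n j : (e n)`_j = 'C(n - j, j)%:R * (-1) ^+ j.
Proof.
rewrite coef_poly; case: ltnP => // H.
by rewrite (_ : n - j = 0)%N ?bin0n; [rewrite (_ : (j == 0) = false) ?mul0r //; lia | lia].
Qed.

Lemma e_rec n : e n.+2 = e n.+1 - 'X * e n.
Proof.
apply/polyP=> j; rewrite coefB coefXM !coef_e.
case: j => [|j] /=; first by rewrite !bin0 subr0.
rewrite exprS mulN1r /=.
case: (leqP j n) => H.
  rewrite (_ : n.+2 - j.+1 = (n - j).+1)%N; last lia.
  rewrite (_ : n.+1 - j.+1 = (n - j))%N; last lia.
  by rewrite binS natrD mulrDl !mulrN.
rewrite !bin_small ?mul0r ?subrr //; lia.
Qed.
Lemma mk_congr (K : comNzRingType) (a b c d a' b' c' d' : K) :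
  a = a' -> b = b' -> c = c' -> d = d' -> mk a b c d = mk a' b' c' d'.
Proof. by move=> -> -> -> ->. Qed.

Definition s : {poly F} := 1 - 4%:P * 'X.
Definition c n : {poly F} := (2 ^+ n)%:P * e n.
Definition N : 'M[{poly F}]_2 := mk 0 1 s 0.

Lemma c_rec n : c n.+2 = 2 * c n.+1 - 4 * 'X * c n.
Proof.
rewrite /c e_rec !rmorphXn /= !polyC_natr !exprS. ring.
Qed.

Lemma c0 : c 0 = 1.
Proof. rewrite /c expr0 mul1r; apply/polyP=> j; rewrite coef_e coefC; case: j => [|j]; by rewrite ?bin0 ?bin0n /= ?mulr1 ?mul0r. Qed.

Lemma c1 : c 1 = 2.
Proof.
rewrite /c expr1 polyC_natr; apply/polyP=> j; rewrite mulr_natl coefMn coef_e coefMn coefC.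
case: j => [|[|j]] //=; by rewrite ?mulr1 ?mul0r.
Qed.

Lemma Mpow n : (1 + N) ^+ n.+1 = mk (c n.+1 - c n) (c n) (s * c n) (c n.+1 - c n).
Proof.
elim: n => [|n IH].
  by rewrite expr1 /N mk1 mkD c1 c0 !add0r !addr0 mulr1; apply: mk_congr => //; ring.
rewrite exprSr IH /N mk1 mkD mkM c_rec /s add0r addr0.
by apply: mk_congr; ring.
Qed.

Lemma Npow m : N ^+ (2 * m).+1 = mk 0 (s ^+ m) (s ^+ m.+1) 0.
Proof.
elim: m => [|m IH]; first by rewrite expr1.
rewrite (_ : (2 * m.+1).+1 = (2 * m).+1 + 2)%N; last lia.
rewrite exprD IH expr2 /N !mkM; apply: mk_congr; rewrite ?exprS; ring.
Qed.

Lemma Frob p k : p \in [pchar {poly F}] -> (1 + N) ^+ (p ^ k)%N = 1 + N ^+ (p ^ k)%N.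
Proof.
move=> hp.
have hpM : p \in [pchar 'M[{poly F}]_2].
  move: hp; rewrite !inE => /andP[-> /eqP h]; by rewrite matnat h raddf0 eqxx.
elim: k => [|k IH]; first by rewrite !expn0 !expr1.
rewrite expnSr !exprM IH.
have := pFrobenius_autD_comm hpM (commr1 (N ^+ (p ^ k))).
rewrite !pFrobenius_autE expr1n => H; by rewrite addrC H addrC.
Qed.
End P.

Lemma Dcoef_eq n j : (0 < j < n)%N ->
  Dcoef n j = ('C(n - j, j))%:Z - 2 * ('C(n - j - 1, j - 1))%:Z.
Proof.
move=> H; rewrite /Dcoef.
have Hb := mul_bin_diag (n - j) (j - 1).
rewrite (_ : (j - 1).+1 = j) in Hb; last lia.
rewrite (_ : (n - j).-1 = n - j - 1)%N in Hb; last lia.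
rewrite (_ : (n%:Z - (3 * j)%:Z) * ('C(n - j, j))%:Z =
   (n - j)%:Z * (('C(n - j, j))%:Z - 2 * ('C(n - j - 1, j - 1))%:Z)).
  by rewrite mulKz //; lia.
nia.
Qed.

Lemma Dcoef0 n : (0 < n)%N -> Dcoef n 0 = 1.
Proof. move=> H; rewrite /Dcoef muln0 subr0 bin0 subn0 mulr1 divzz; lia. Qed.

Lemma D3_e (F : comNzRingType) t : D3 t.+2 (1 : F) = e F t.+2 + 2%:P * ('X * e F t).
Proof.
rewrite /D3 /=.
have -> : \sum_(i < t.+2./2.+1) ((Dcoef t.+2 i)%:~R * 1 ^+ (t.+2 - 2 * i)) *: (- 'X) ^+ i
   = \poly_(i < t.+2./2.+1) ((Dcoef t.+2 i)%:~R * (-1) ^+ i) :> {poly F}.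
  rewrite poly_def; apply: eq_bigr => i _.
  by rewrite -scaleN1r exprZn scalerA expr1n mulr1.
apply/polyP => j; rewrite coef_poly coefD coefCM coefXM !coef_e.
case: j => [|j] /=.
  by rewrite Dcoef0 // bin0 mulr0 addr0.
case: ltnP => H; rewrite -divn2 in H.
  rewrite Dcoef_eq; last lia.
  rewrite (_ : (t.+2 - j.+1 - 1 = t - j)%N); last lia.
  rewrite (_ : (j.+1 - 1 = j)%N); last lia.
  rewrite intrB intrM -!pmulrn exprS; ring.
rewrite !bin_small ?mul0r ?mulr0 ?addr0 //; lia.
Qed.

Lemma alg (R : comNzRingType) (a b y : R) t :
  2 * (2 * 2 ^+ t) * (b + 2 * (a - b)) + 1 - 3 * y =
  3 * (2 * 2 ^+ t * a - y) - (2 * (2 * 2 ^+ t) * b - 2 * 2 ^+ t * a - 1).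
Proof. ring. Qed.

Unset Implicit Arguments. Set Strict Implicit.

Theorem proposition2p7 (F : finFieldType) (p k : nat)
  (hp : prime p) (hchar : p \in [pchar F]) (hp3 : (3 < p)%N) (hk : (0 < k)%N) :
  (2 ^+ (p ^ k)) *: D3 (p ^ k) (1 : F) + 1
  = 3 *: (1 - 4 *: 'X) ^+ ((p ^ k).-1 %/ 2).
Proof.
have hodd : odd p by case: (even_prime hp) => // h2; rewrite h2 in hp3.
have hnodd : odd (p ^ k) by rewrite oddX hodd orbT.
have hn5 : (p <= p ^ k)%N.
  by rewrite -{1}(expn1 p) leq_pexp2l // prime_gt0.
have hdh := odd_double_half (p ^ k).
rewrite hnodd -muln2 in hdh.
set n := (p ^ k)%N in hnodd hn5 hdh *.
set m := (n.-1 %/ 2)%N.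
have hm : n = (2 * m).+1 by rewrite /m; lia.
have [t ht] : exists t, n = t.+2 by exists (n - 2)%N; lia.
have hpP : p \in [pchar {poly F}] by rewrite pchar_poly.
have HF := @Frob F p k hpP.
rewrite -/n {2}hm Npow ht Mpow mk1 mkD !add0r !addr0 in HF.
have [h1 h2 _ _] := mk_inj HF.
rewrite ht D3_e.
have hx : 'X * e F t = e F t.+1 - e F t.+2 by rewrite e_rec; ring.
rewrite hx.
move: h1 h2; rewrite /c /s -!mul_polyC !rmorphXn /= !polyC_natr => h1 h2.
apply/eqP; rewrite -subr_eq0; apply/eqP.
rewrite -[RHS](_ : 3 * ((2 ^+ t.+1) * e F t.+1 - (1 - 4 * 'X) ^+ m)
   - ((2 ^+ t.+2 * e F t.+2 - 2 ^+ t.+1 * e F t.+1) - 1) = 0); last first.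
  by rewrite h1 h2 !subrr mulr0 subr0.
rewrite !exprS; exact: alg.
Qed.
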